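(* For every $n\geq 0$, the map $w\mapsto P_w$ induces a bijection from the set of packed words of length $n$ to the set of isomorphism classes of weak plane posets with $n$ elements. Its inverse is described as follows: given a weak plane poset $P$ with $n$ elements, identify $P$ with $[n]$ via the unique bijection that is increasing from $(P,\ll)$ to $([n],\leq)$, where $x\ll y\iff(y\leq_1 x$ or $x\leq_2 y)$ (a total order on $P$); then the inverse image of the class of $P$ is the packed word $w$ associated to the total quasi-order $\preceq$ of $P$, i.e. the packed word with $w(i)\leq w(j)\iff i\preceq j$.
   Context: A packed word of length $n$ is a word $w(1)\cdots w(n)$ of positive integers whose set of letters is $\{1,\dots,k\}$ for some $k$. A double poset is a finite set with two partial orders $\leq_1,\leq_2$; two double posets are isomorphic if there is a bijection between them which, together with its inverse, preserves both orders. A weak plane poset is a double poset such that (1) $x\leq_1 y$ and $x\leq_2 y$ imply $x=y$, and (2) the relation $x\preceq y\iff(x\leq_1 y$ or $x\leq_2 y)$ is a total quasi-order (reflexive, transitive, all elements comparable). For a packed word $w$ of length $n$, $P_w=([n],\leq_1,\leq_2)$ with $i\leq_1 j\iff(i\geq j$ and $w(i)\leq w(j))$ and $i\leq_2 j\iff(i\leq j$ and $w(i)\leq w(j))$; it is a weak plane poset. To a total quasi-order $\preceq$ on $[n]$ one associates the packed word $w$ with $w(i)\leq w(j)\iff i\preceq j$. *)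

(* Defs.v *)
From mathcomp Require Import all_boot.
Set Implicit Arguments. Unset Strict Implicit. Unset Printing Implicit Defensive.

Definition packed (w : seq nat) : bool :=
  (0 \notin w) && all (fun a => a \in w) (iota 1 (\max_(a <- w) a)).

Definition is_porder (T : finType) (r : rel T) : Prop :=
  reflexive r /\ antisymmetric r /\ transitive r.

Definition double_poset (T : finType) (le1 le2 : rel T) : Prop :=
  is_porder le1 /\ is_porder le2.

Definition qrel (T : finType) (le1 le2 : rel T) : rel T :=
  fun x y => le1 x y || le2 x y.

Definition total_quasi_order (T : finType) (r : rel T) : Prop :=
  reflexive r /\ transitive r /\ total r.

Definition weak_plane_poset (T : finType) (le1 le2 : rel T) : Prop :=
  double_poset le1 le2 /\
  (forall x y, le1 x y -> le2 x y -> x = y) /\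
  total_quasi_order (qrel le1 le2).

Definition dp_iso (T1 T2 : finType) (a1 a2 : rel T1) (b1 b2 : rel T2) : Prop :=
  exists f : T1 -> T2, bijective f /\
    forall x y, a1 x y = b1 (f x) (f y) /\ a2 x y = b2 (f x) (f y).

(* The double poset P_w on positions of w (0-based positions 'I_n, i.e.
   position i here corresponds to position i+1 in the paper). *)
Definition Pw1 (n : nat) (w : seq nat) : rel 'I_n :=
  fun i j => (j <= i) && (nth 0 w i <= nth 0 w j).
Definition Pw2 (n : nat) (w : seq nat) : rel 'I_n :=
  fun i j => (i <= j) && (nth 0 w i <= nth 0 w j).

Definition llrel (T : finType) (le1 le2 : rel T) : rel T :=
  fun x y => le1 y x || le2 x y.
Arguments Pw1 n w i j : clear implicits.
Arguments Pw2 n w i j : clear implicits.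

(* Main.v *)
Require Import Defs.
From mathcomp Require Import all_boot.
Set Implicit Arguments. Unset Strict Implicit. Unset Printing Implicit Defensive.

Lemma sorted_index_eq (T : eqType) (r : rel T) s :
  transitive r -> reflexive r -> antisymmetric r -> sorted r s ->
  {in s &, forall x y, (index x s <= index y s) = r x y}.
Proof.
move=> tr rf an so x y xs ys; apply/idP/idP; first exact: sorted_leq_index.
move=> rxy; rewrite leqNgt; apply/negP=> lt.
have ryx := sorted_leq_index tr rf so _ _ ys xs (ltnW lt).
have exy : x = y by apply: an; rewrite rxy ryx.
by rewrite exy ltnn in lt.
Qed.

Lemma mono_ge n (h : 'I_n -> 'I_n) :
  (forall i j : 'I_n, (i <= j) = (h i <= h j)) -> forall i : 'I_n, i <= h i.
Proof.
move=> H.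
suff: forall m (i : 'I_n), val i = m -> m <= h i by move=> S i; exact: S.
elim=> [|m IH] i hi //.
have lt : m < n by rewrite (leq_trans _ (ltn_ord i)) // hi.
have := IH (Ordinal lt) erefl.
have : h (Ordinal lt) < h i by rewrite ltnNge -H /= hi -ltnNge.
move=> a b; exact: leq_ltn_trans b a.
Qed.

Lemma id_mono n (h : 'I_n -> 'I_n) : bijective h ->
  (forall i j : 'I_n, (i <= j) = (h i <= h j)) -> h =1 id.
Proof.
move=> [g hK gK] H i; apply/val_inj/eqP; rewrite /= eqn_leq (mono_ge H) andbT.
have Hg : forall a b : 'I_n, (a <= b) = (g a <= g b) by move=> a b; rewrite [in RHS]H !gK.
by have := mono_ge Hg (h i); rewrite hK.
Qed.

Lemma packed_half (w w' : seq nat) : packed w -> 0 \notin w' -> size w = size w' ->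
  (forall i j, i < size w -> j < size w ->
     (nth 0 w i <= nth 0 w j) = (nth 0 w' i <= nth 0 w' j)) ->
  forall i, i < size w -> nth 0 w i <= nth 0 w' i.
Proof.
move=> /andP[w0 /allP wall] w'0 sz H.
suff: forall v i, i < size w -> nth 0 w i = v -> v <= nth 0 w' i.
  by move=> S i iw; exact: S.
elim/ltn_ind=> v IH i iw hv.
case: v IH hv => [|[|u]] IH hv //.
  rewrite lt0n; apply/negP=> /eqP e.
  by move: w'0; rewrite -e mem_nth // -sz.
have um : u.+1 \in w.
  apply: wall; rewrite mem_iota /= ltnS.
  have := @leq_bigmax_seq _ w predT (fun a => a) (nth 0 w i) (mem_nth 0 iw) erefl.
  by rewrite hv => /(leq_trans _); apply.
have jw : index u.+1 w < size w by rewrite index_mem.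
have hj := nth_index 0 um.
have := IH u.+1 (ltnSn _) _ jw hj.
have : ~~ (nth 0 w i <= nth 0 w (index u.+1 w)) by rewrite hv hj -ltnNge.
rewrite H // -ltnNge => a b; exact: leq_ltn_trans b a.
Qed.

Lemma packed_ord (w w' : seq nat) : packed w -> packed w' -> size w = size w' ->
  (forall i j, i < size w -> j < size w ->
     (nth 0 w i <= nth 0 w j) = (nth 0 w' i <= nth 0 w' j)) -> w = w'.
Proof.
move=> pw pw' sz H.
have h1 := packed_half pw (proj1 (andP pw')) sz H.
have h2 : forall i, i < size w' -> nth 0 w' i <= nth 0 w i.
  apply: packed_half => //; first by case/andP: pw.
  by move=> i j; rewrite -sz => ? ?; rewrite H.
apply: (eq_from_nth (x0 := 0) sz) => i iw.
by apply/eqP; rewrite eqn_leq h1 // h2 // -sz.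
Qed.

Lemma pack_exists (u : seq nat) : exists w, [/\ size w = size u, packed w &
  forall i j, i < size u -> j < size u ->
     (nth 0 w i <= nth 0 w j) = (nth 0 u i <= nth 0 u j)].
Proof.
set d := sort leq (undup u).
have dso : sorted leq d by apply: sort_sorted; exact: leq_total.
have du : uniq d by rewrite sort_uniq undup_uniq.
have dm : forall a, (a \in d) = (a \in u) by move=> a; rewrite mem_sort mem_undup.
exists [seq (index a d).+1 | a <- u]; split.
- by rewrite size_map.
- apply/andP; split; first by apply/mapP=> [[a _]].
  apply/allP=> k; rewrite mem_iota => /andP[k1 kM].
  have hM : \max_(a <- [seq (index a0 d).+1 | a0 <- u]) a <= size d.
    apply/bigmax_leqP_seq=> b /mapP[a au ->] _.
    by rewrite index_mem dm.
  have kd : k.-1 < size d.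
    by rewrite prednK //; rewrite add1n ltnS in kM; exact: leq_trans kM hM.
  apply/mapP; exists (nth 0 d k.-1); first by rewrite -dm mem_nth.
  by rewrite index_uniq // prednK.
- move=> i j iu ju; rewrite !(nth_map 0) // ltnS.
  by apply: sorted_index_eq => //; [exact: leq_trans | exact: anti_leq | rewrite dm mem_nth | rewrite dm mem_nth].
Qed.

Section WPP.
Variables (T : finType) (le1 le2 : rel T).
Hypothesis W : weak_plane_poset le1 le2.

Let r1 : reflexive le1. Proof. by case: W => [[[]]]. Qed.
Let a1 : antisymmetric le1. Proof. by case: W => [[[_ []]]]. Qed.
Let t1 : transitive le1. Proof. by case: W => [[[_ []]]]. Qed.
Let r2 : reflexive le2. Proof. by case: W => [[_ []]]. Qed.
Let a2 : antisymmetric le2. Proof. by case: W => [[_ [_ []]]]. Qed.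
Let t2 : transitive le2. Proof. by case: W => [[_ [_ []]]]. Qed.
Let c12 : forall x y, le1 x y -> le2 x y -> x = y. Proof. by case: W => [_ []]. Qed.
Lemma wpp_qtot : total (qrel le1 le2). Proof. by case: W => [_ [_ [_ []]]]. Qed.
Lemma wpp_qtr : transitive (qrel le1 le2). Proof. by case: W => [_ [_ [_ []]]]. Qed.

Lemma ll_refl : reflexive (llrel le1 le2).
Proof. by move=> x; rewrite /llrel r2 orbT. Qed.

Lemma ll_total : total (llrel le1 le2).
Proof.
move=> x y; rewrite /llrel; have := wpp_qtot x y; rewrite /qrel.
by case/orP=> /orP[] ->; rewrite ?orbT.
Qed.

Lemma ll_anti : antisymmetric (llrel le1 le2).
Proof.
move=> x y; rewrite /llrel => /andP[/orP[h1|h1] /orP[h2|h2]].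
- by apply: a1; rewrite h1 h2.
- by apply/esym/c12.
- by apply: c12.
- by apply: a2; rewrite h1 h2.
Qed.

Lemma ll_trans : transitive (llrel le1 le2).
Proof.
move=> y x z; rewrite /llrel => /orP[h1|h1] /orP[h2|h2].
- by rewrite (t1 h2 h1).
- have := wpp_qtot x z; rewrite /qrel => /orP[/orP[h|h]|/orP[h|h]]; rewrite ?h ?orbT //.
  + have e : y = z by apply: c12 => //; exact: t1 h1 h.
    by rewrite -e h1.
  + have e : y = x by apply: c12 => //; exact: t2 h2 h.
    by rewrite -e h2 orbT.
- have := wpp_qtot x z; rewrite /qrel => /orP[/orP[h|h]|/orP[h|h]]; rewrite ?h ?orbT //.
  + have e : x = y by apply: c12 => //; exact: t1 h h2.
    by rewrite e h2.
  + have e : z = y by apply: c12 => //; exact: t2 h h1.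
    by rewrite e h1 orbT.
- by rewrite (t2 h1 h2) orbT.
Qed.

Lemma le1_ll x y : le1 x y = llrel le1 le2 y x && qrel le1 le2 x y.
Proof.
rewrite /llrel /qrel; case h: (le1 x y) => //=.
case h1: (le2 y x); case h2: (le2 x y) => //.
have e : x = y by apply: a2; rewrite h1 h2.
by rewrite e r1 in h.
Qed.

Lemma le2_ll x y : le2 x y = llrel le1 le2 x y && qrel le1 le2 x y.
Proof.
rewrite /llrel /qrel; case h: (le2 x y); first by rewrite !orbT.
rewrite !orbF; case h1: (le1 y x); case h2: (le1 x y) => //.
have e : x = y by apply: a1; rewrite h1 h2.
by rewrite e r2 in h.
Qed.
End WPP.

Lemma llPw n w (i j : 'I_n) : llrel (Pw1 n w) (Pw2 n w) i j = (i <= j).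
Proof. by rewrite /llrel /Pw1 /Pw2 -andb_orr leq_total andbT. Qed.

Lemma qPw n w (i j : 'I_n) : qrel (Pw1 n w) (Pw2 n w) i j = (nth 0 w i <= nth 0 w j).
Proof. by rewrite /qrel /Pw1 /Pw2 -andb_orl leq_total. Qed.

Lemma Pw_wpp n w : weak_plane_poset (Pw1 n w) (Pw2 n w).
Proof.
split; first (split; split; try split); last split.
- by move=> i; rewrite /Pw1 !leqnn.
- by move=> i j /andP[/andP[a _] /andP[b _]]; apply/val_inj/anti_leq; rewrite a b.
- move=> j i k /andP[a b] /andP[c d]; apply/andP; split.
  + exact: leq_trans c a.
  + exact: leq_trans b d.
- by move=> i; rewrite /Pw2 !leqnn.
- by move=> i j /andP[/andP[a _] /andP[b _]]; apply/val_inj/anti_leq; rewrite a b.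
- move=> j i k /andP[a b] /andP[c d]; apply/andP; split.
  + exact: leq_trans a c.
  + exact: leq_trans b d.
- by move=> i j /andP[a _] /andP[b _]; apply/val_inj/anti_leq; rewrite a b.
- split; [|split].
  + by move=> i; rewrite qPw.
  + by move=> j i k; rewrite !qPw; apply: leq_trans.
  + by move=> i j; rewrite !qPw leq_total.
Qed.

Theorem mainTheorem3 (n : nat) :
  (* P_w is a weak plane poset with n elements *)
  (forall w : seq nat, size w = n -> packed w ->
     weak_plane_poset (Pw1 n w) (Pw2 n w)) /\
  (* injectivity on isomorphism classes *)
  (forall w w' : seq nat, size w = n -> size w' = n -> packed w -> packed w' ->
     dp_iso (Pw1 n w) (Pw2 n w) (Pw1 n w') (Pw2 n w') -> w = w') /\
  (* surjectivity, with the explicit description of the inverse *)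
  (forall (T : finType) (le1 le2 : rel T), #|T| = n ->
     weak_plane_poset le1 le2 ->
     (is_porder (llrel le1 le2) /\ total (llrel le1 le2)) /\
     exists f : T -> 'I_n,
       [/\ bijective f,
           (forall x y, llrel le1 le2 x y = (f x <= f y)),
           (forall g : T -> 'I_n, bijective g ->
              (forall x y, llrel le1 le2 x y = (g x <= g y)) -> g =1 f),
           (exists w : seq nat, [/\ size w = n, packed w &
              forall x y, (nth 0 w (f x) <= nth 0 w (f y)) = qrel le1 le2 x y]) &
           (forall w : seq nat, size w = n -> packed w ->
              (forall x y, (nth 0 w (f x) <= nth 0 w (f y)) = qrel le1 le2 x y) ->
              dp_iso le1 le2 (Pw1 n w) (Pw2 n w))]).
Proof.
split; first by move=> w _ _; exact: Pw_wpp.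
split.
  move=> w w' sw sw' pw pw' [f [fb H]].
  have fid : f =1 id.
    apply: id_mono => // i j.
    by rewrite -(llPw w i j) -(llPw w' (f i)) /llrel -(proj1 (H _ _)) -(proj2 (H _ _)).
  have Hq : forall i j : 'I_n, (nth 0 w i <= nth 0 w j) = (nth 0 w' i <= nth 0 w' j).
    move=> i j; rewrite -qPw -(qPw w' i j) /qrel.
    by rewrite (proj1 (H i j)) (proj2 (H i j)) !fid.
  apply: packed_ord => //; first by rewrite sw sw'.
  rewrite sw => i j ii jj.
  exact: (Hq (Ordinal ii) (Ordinal jj)).
move=> T le1 le2 cT W.
have lltr := ll_trans W; have llrf := ll_refl W; have llan := ll_anti W.
split; first by split; [split; [|split] | exact: ll_total W].
set s := sort (llrel le1 le2) (enum T).
have sso : sorted (llrel le1 le2) s by apply: sort_sorted; exact: ll_total.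
have ss : forall x, x \in s by move=> x; rewrite mem_sort mem_enum.
have fP : forall x, index x s < n.
  by move=> x; rewrite -cT cardE -(size_sort (llrel le1 le2)) index_mem.
pose f x := Ordinal (fP x).
have fll : forall x y, llrel le1 le2 x y = (f x <= f y).
  by move=> x y; rewrite /= (sorted_index_eq lltr llrf llan sso).
have finj : injective f.
  move=> x y e; apply: llan; rewrite !fll e leqnn //.
have fb : bijective f by apply: inj_card_bij => //; rewrite card_ord cT.
have [fi fK fiK] := fb.
exists f; split => //.
- move=> g gb Hg.
  have hid : (g \o fi) =1 id.
    apply: id_mono; first exact: bij_comp gb (Bijective fiK fK).
    by move=> i j; rewrite /= -Hg -{1}(fiK i) -{1}(fiK j) -fll.
  by move=> x; have := hid (f x); rewrite /= fK.
- pose v x := #|[set z | qrel le1 le2 z x]|.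
  have vq : forall x y, qrel le1 le2 x y = (v x <= v y).
    move=> x y; apply/idP/idP.
      move=> h; apply: subset_leq_card; apply/subsetP=> z; rewrite !inE => hz.
      exact: (@wpp_qtr _ _ _ W x z y hz h).
    apply: contraTT => h; rewrite -ltnNge; apply: proper_card; apply/properP; split.
      apply/subsetP=> z; rewrite !inE => hz.
      have := wpp_qtot W x y; rewrite (negbTE h) /= => hyx.
      exact: (@wpp_qtr _ _ _ W y z x hz hyx).
    by exists x; rewrite !inE ?(negbTE h) //; apply/orP; left; case: W => [[[]]].
  pose u := [seq v (fi i) | i <- enum 'I_n].
  have su : size u = n by rewrite size_map size_enum_ord.
  have [w [sw pw Hw]] := pack_exists u.
  exists w; split => //; first by rewrite sw.
  move=> x y; rewrite Hw ?su // !(nth_map (f x)) -?enumT ?size_enum_ord //.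
  by rewrite !nth_ord_enum !fK vq.
- move=> w sw pw Hw; exists f; split => // x y; split.
  + by rewrite (le1_ll W) /Pw1 -fll Hw.
  + by rewrite (le2_ll W) /Pw2 -fll Hw.
Qed.
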